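(* Let $N$ be a non-orientable $3$-manifold triangulated by finitely many ideal hyperbolic tetrahedra $A_i$. The triangulation bestows a hyperbolic structure around the edge cycle $[e]=\{e_{i_1,j_1},\dots,e_{i_n,j_n}\}$ if and only if $$\prod_{l=1}^n \frac{z(e_{i_l,j_l})^{\epsilon_l}}{\overline{z(e_{i_l,j_l})}^{\,1-\epsilon_l}}=1\qquad\text{and}\qquad \sum_{l=1}^n\arg\big(z(e_{i_l,j_l})\big)=2\pi,$$ where $z(e_{i_l,j_l})$ is the edge invariant of $e_{i_l,j_l}$ and $\epsilon_l\in\{0,1\}$ is such that, in the gluing around $[e]$, a coherent orientation of the tetrahedra is obtained by gluing a copy of $A_{i_l}$ with its orientation reversed if $\epsilon_l=0$ and with its original orientation if $\epsilon_l=1$, with the orientation of $A_{i_1}$ kept as given.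
   Context: An ideal tetrahedron is a geodesic tetrahedron in $\mathbb{H}^3$ with all vertices on $\partial_\infty\mathbb{H}^3=\mathbb{C}\cup\{\infty\}$. After an orientation-preserving isometry (with respect to the given orientation of the tetrahedron) its vertices are $0,1,\infty,z$, and the edge from $z$ to $\infty$ has edge invariant $z$. An edge cycle is the set of edges of tetrahedra identified to a single edge of $N$. *)

(* Defs.v *)
From Stdlib Require Import Reals Lra Arith.
From Coquelicot Require Import Coquelicot.
Open Scope R_scope.

(** * The sphere at infinity  dH^3 = C u {oo}, in homogeneous coordinates.
    A point is a nonzero pair (p1,p2) : C*C up to scaling; (z,1) is z and
    (1,0) is oo. *)
Definition Pt := (C * C)%type.
Definition nonzero_pt (p : Pt) : Prop := fst p <> 0%C \/ snd p <> 0%C.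
Definition det2 (p q : Pt) : C := (fst p * snd q - snd p * fst q)%C.
Definition same_pt (p q : Pt) : Prop := det2 p q = 0%C.

(** cross ratio, normalised so that cr 0 oo 1 z = z *)
Definition cr (a b c d : Pt) : C :=
  ((det2 d a * det2 c b) / (det2 d b * det2 c a))%C.

(** * Isometries of H^3, acting on the sphere at infinity (Poincare extension):
    w |-> M w  (Moebius, orientation preserving) or  w |-> M conj(w)
    (anti-Moebius, orientation reversing), M an invertible 2x2 complex matrix. *)
Record isom := Isom {
  im_a : C; im_b : C; im_c : C; im_d : C;
  im_rev : bool
}.
Definition isom_ok (g : isom) : Prop :=
  (im_a g * im_d g - im_b g * im_c g)%C <> 0%C.
Definition orientation_preserving (g : isom) : bool := negb (im_rev g).
Definition act (g : isom) (p : Pt) : Pt :=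
  let p' := if im_rev g then (Cconj (fst p), Cconj (snd p)) else p in
  ((im_a g * fst p' + im_b g * snd p')%C, (im_c g * fst p' + im_d g * snd p')%C).

(** * Ideal tetrahedra: four distinct ideal points not on a common circle
    (i.e. non-degenerate). They are regarded as oriented by the orientation
    of H^3. *)
Definition ideal_tetra (v0 v1 v2 v3 : Pt) : Prop :=
  nonzero_pt v0 /\ nonzero_pt v1 /\ nonzero_pt v2 /\ nonzero_pt v3 /\
  ~ same_pt v0 v1 /\ ~ same_pt v0 v2 /\ ~ same_pt v0 v3 /\
  ~ same_pt v1 v2 /\ ~ same_pt v1 v3 /\ ~ same_pt v2 v3 /\
  Im (cr v0 v1 v2 v3) <> 0.

(** Edge invariant of the edge {a,b} of the (positively oriented) ideal
    tetrahedron with vertices a,b,c,d: the z such that an orientation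
    preserving isometry sends a,b to 0,oo and the remaining two vertices to
    1 and z, with (0,oo,1,z) positively oriented, i.e. Im z > 0. *)
Definition edge_inv (a b c d : Pt) : C :=
  if Rlt_dec 0 (Im (cr a b c d)) then cr a b c d else Cinv (cr a b c d).

(** principal argument, in (-PI, PI] *)
Definition arg (z : C) : R :=
  if Rle_dec 0 (Im z) then acos (Re z / Cmod z) else - acos (Re z / Cmod z).

(** Dihedral angle at the edge {a,b} of the ideal tetrahedron a,b,c,d:
    move a,b to 0,oo by the isometry w |-> (w-a)/(w-b); the two faces through
    the edge become vertical half-planes over the rays from 0 through the
    images p,q of c,d, and the dihedral angle is the angle between p and q. *)
Definition dihedral (a b c d : Pt) : R :=
  let p := (det2 c a / det2 c b)%C in
  let q := (det2 d a / det2 d b)%C in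
  acos (Re (p * Cconj q) / (Cmod p * Cmod q)).

(** x and y lie on opposite sides of the hyperbolic plane spanned by the
    ideal triangle p,q,r (= opposite sides of the circle through p,q,r). *)
Definition opposite_sides (p q r x y : Pt) : Prop :=
  Im (cr p q r x) * Im (cr p q r y) < 0.

Fixpoint Rsum (n : nat) (f : nat -> R) : R :=
  match n with O => 0 | S k => Rsum k f + f k end.
Fixpoint Cprod (n : nat) (f : nat -> C) : C :=
  match n with O => 1%C | S k => (Cprod k f * f k)%C end.

Definition next (n l : nat) : nat := if Nat.eqb (S l) n then O else S l.

(** Tetrahedra A i (i < m) have vertices A i 0, .., A i 3.  The l-th member
    (l < n) of the cycle is the edge {va l, vb l} of A (idx l); its two faces
    containing the edge are {va,vb,vc} and {va,vb,vd}.  Face {va,vb,vd} of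
    copy l is glued to face {va,vb,vc} of copy (next n l), va->va, vb->vb,
    vd->vc; this gluing is realised by an isometry h l of H^3 that maps
    the face accordingly and puts A (idx l) on the other side of the face
    than A (idx (next n l)). *)
Definition vA (A : nat -> nat -> Pt) (idx v : nat -> nat) (l : nat) : Pt :=
  A (idx l) (v l).

(** The triangulation bestows a hyperbolic structure around the edge cycle:
    the copies can be developed in H^3 by isometries g l, consecutive copies
    sharing the glued face (pointwise, via the gluing) and lying on opposite
    sides of it, the development closing up (trivial holonomy: also copy n-1
    is glued to copy 0), and the developed tetrahedra fill the neighbourhood
    of the common edge exactly once (dihedral angles sum to 2 PI). *)
Definition hyp_structure_around (A : nat -> nat -> Pt) (n : nat)
    (idx va vb vc vd : nat -> nat) : Prop :=
  exists g : nat -> isom,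
    (forall l, (l < n)%nat -> isom_ok (g l)) /\
    (forall l, (l < n)%nat ->
       let l' := next n l in
       same_pt (act (g l) (vA A idx va l)) (act (g l') (vA A idx va l')) /\
       same_pt (act (g l) (vA A idx vb l)) (act (g l') (vA A idx vb l')) /\
       same_pt (act (g l) (vA A idx vd l)) (act (g l') (vA A idx vc l')) /\
       opposite_sides (act (g l') (vA A idx va l')) (act (g l') (vA A idx vb l'))
         (act (g l') (vA A idx vc l'))
         (act (g l) (vA A idx vc l)) (act (g l') (vA A idx vd l'))) /\
    Rsum n (fun l => dihedral (vA A idx va l) (vA A idx vb l)
                              (vA A idx vc l) (vA A idx vd l)) = 2 * PI.

(* Main.v *)
Require Import Defs.
From Stdlib Require Import Reals Arith Lra Lia Classical.
From Coquelicot Require Import Coquelicot.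
Open Scope R_scope.


Lemma Cinv_0 : Cinv 0 = 0%C.
Proof. unfold Cinv; simpl. apply injective_projections; simpl; unfold Rdiv; lra.
Qed.

Lemma Cneq0_RR (z : C) : z <> 0%C -> fst z ^ 2 + snd z ^ 2 <> 0.
Proof. intros H E. apply H. destruct z as [x y]; simpl in *.
  assert (x = 0) by nra. assert (y = 0) by nra. subst. reflexivity. Qed.

Lemma Cinv_mult_gen (a b : C) : Cinv (a * b) = (Cinv a * Cinv b)%C.
Proof.
  destruct (classic (a = 0%C)) as [Ha|Ha].
  { subst. rewrite Cmult_0_l, Cinv_0. ring. }
  destruct (classic (b = 0%C)) as [Hb|Hb].
  { subst. rewrite Cmult_0_r, Cinv_0. ring. }
  field. auto.
Qed.

Lemma Cmult_eq0 (a b : C) : (a * b = 0)%C -> a = 0%C \/ b = 0%C.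
Proof. intros H. destruct (classic (a = 0%C)); auto. right.
  rewrite <- (Cmult_1_l b), <- (Cinv_l a) by auto. rewrite <- Cmult_assoc, H. ring. Qed.

Lemma Cconj_eq0 (a : C) : Cconj a = 0%C -> a = 0%C.
Proof. intros H. rewrite <- (Cconj_conj a), H. unfold Cconj; simpl.
  apply injective_projections; simpl; lra. Qed.

Definition rho (b : bool) (z : C) : C := if b then Cconj z else z.

Lemma rho_mult b (x y : C) : rho b (x * y)%C = (rho b x * rho b y)%C.
Proof. destruct b; simpl; auto using Cmult_conj. Qed.
Lemma rho_inv b (x : C) : rho b (Cinv x) = Cinv (rho b x).
Proof. destruct b; simpl; auto. destruct (classic (x = 0%C)).
  subst. rewrite Cinv_0. unfold Cconj; simpl. rewrite !Ropp_0. 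
  change (0,0) with (RtoC 0). rewrite Cinv_0. reflexivity.
  apply Cinv_conj; auto. Qed.
Lemma rho_div b (x y : C) : rho b (x / y)%C = (rho b x / rho b y)%C.
Proof. unfold Cdiv. rewrite rho_mult, rho_inv. auto. Qed.
Lemma rho_neq0 b (x : C) : x <> 0%C -> rho b x <> 0%C.
Proof. destruct b; simpl; auto. intros H E; apply H, Cconj_eq0, E. Qed.
Lemma Im_rho b (x : C) : Im (rho b x) = (if b then - Im x else Im x).
Proof. destruct b; simpl; auto. Qed.
Lemma rho_1 b : rho b 1%C = 1%C.
Proof. destruct b; simpl; auto. unfold Cconj; simpl. apply injective_projections; simpl; lra. Qed.

Definition detI (g : isom) : C := (im_a g * im_d g - im_b g * im_c g)%C.

Lemma det2_act g p q :
  det2 (act g p) (act g q) = (detI g * rho (im_rev g) (det2 p q))%C.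
Proof.
  unfold det2, act, detI, rho. destruct (im_rev g); simpl.
  - rewrite Cminus_conj, !Cmult_conj. ring.
  - ring.
Qed.

Lemma Cmult_eq_reg_l (k a b : C) : k <> 0%C -> (k * a = k * b)%C -> a = b.
Proof. intros Hk H. replace a with (/k * (k * a))%C by (field; auto).
  rewrite H. field; auto. Qed.


Definition smul (k : C) (p : Pt) : Pt := ((k * fst p)%C, (k * snd p)%C).

Lemma same_refl p : same_pt p p.
Proof. unfold same_pt, det2. ring. Qed.
Lemma same_sym p q : same_pt p q -> same_pt q p.
Proof. unfold same_pt, det2. intros H.
  replace (fst q * snd p - snd q * fst p)%C with (- (fst p * snd q - snd p * fst q))%C by ring.
  rewrite H. ring. Qed.

Lemma same_trans p q r : nonzero_pt q -> same_pt p q -> same_pt q r -> same_pt p r.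
Proof. unfold same_pt, det2, nonzero_pt. intros [H|H] H1 H2.
  - assert (E : (fst q * (fst p * snd r - snd p * fst r))%C =
       (fst p * (fst q * snd r - snd q * fst r) + fst r * (fst p * snd q - snd p * fst q))%C) by ring.
    rewrite H1, H2 in E. assert (E' : (_ * _ = 0)%C) by (rewrite E; ring). destruct (Cmult_eq0 _ _ E'); tauto.
  - assert (E : (snd q * (fst p * snd r - snd p * fst r))%C =
       (snd p * (fst q * snd r - snd q * fst r) + snd r * (fst p * snd q - snd p * fst q))%C) by ring.
    rewrite H1, H2 in E. assert (E' : (_ * _ = 0)%C) by (rewrite E; ring). destruct (Cmult_eq0 _ _ E'); tauto.
Qed.

Lemma same_scale p q : nonzero_pt p -> nonzero_pt q -> same_pt p q ->
  exists k : C, k <> 0%C /\ q = smul k p.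
Proof. unfold same_pt, det2, nonzero_pt, smul. destruct p as [p1 p2], q as [q1 q2]; simpl.
  intros Hp Hq H.
  assert (H0 : (p1 * q2 = p2 * q1)%C). { replace (p1*q2)%C with ((p1 * q2 - p2 * q1) + p2*q1)%C by ring. rewrite H. ring. }
  destruct Hp as [Hp|Hp].
  - assert (E2 : q2 = (q1 / p1 * p2)%C).
    { apply (Cmult_eq_reg_l p1); auto. rewrite H0. field. auto. }
    exists (q1 / p1)%C. split.
    + intros E. rewrite E in E2. destruct Hq as [Hq|Hq]; apply Hq.
      * replace q1 with ((q1/p1) * p1)%C by (field; auto). rewrite E; ring.
      * rewrite E2; ring.
    + rewrite <- E2. f_equal. field; auto.
  - assert (E1 : q1 = (q2 / p2 * p1)%C).
    { apply (Cmult_eq_reg_l p2); auto. rewrite <- H0. field. auto. }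
    exists (q2 / p2)%C. split.
    + intros E. rewrite E in E1. destruct Hq as [Hq|Hq]; apply Hq.
      * rewrite E1; ring.
      * replace q2 with ((q2/p2) * p2)%C by (field; auto). rewrite E; ring.
    + rewrite <- E1. f_equal. field; auto.
Qed.

Lemma Cdiv_cancel (k x y : C) : k <> 0%C -> ((k * x) / (k * y) = x / y)%C.
Proof. intros Hk. unfold Cdiv. rewrite Cinv_mult_gen.
  transitivity (x * / y * (k * / k))%C. ring. rewrite Cinv_r by auto. ring. Qed.

Lemma det2_smul k j p q : det2 (smul k p) (smul j q) = (k * j * det2 p q)%C.
Proof. unfold det2, smul; simpl. ring. Qed.

Lemma cr_smul (ka kb kc kd : C) a b c d : ka <> 0%C -> kb <> 0%C -> kc <> 0%C -> kd <> 0%C ->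
  cr (smul ka a) (smul kb b) (smul kc c) (smul kd d) = cr a b c d.
Proof. intros. unfold cr. rewrite !det2_smul.
  replace ((kd * ka * det2 d a * (kc * kb * det2 c b)))%C with ((ka*kb*kc*kd) * (det2 d a * det2 c b))%C by ring.
  replace ((kd * kb * det2 d b * (kc * ka * det2 c a)))%C with ((ka*kb*kc*kd) * (det2 d b * det2 c a))%C by ring.
  apply Cdiv_cancel. intros E. repeat (destruct (Cmult_eq0 _ _ E) as [E1|E1]; clear E; try rename E1 into E; try tauto).
Qed.

Lemma smul1 p : smul 1%C p = p.
Proof. unfold smul. destruct p; simpl. f_equal; ring. Qed.

Lemma cr_congr a b c d a' b' c' d' :
  nonzero_pt a -> nonzero_pt b -> nonzero_pt c -> nonzero_pt d ->
  nonzero_pt a' -> nonzero_pt b' -> nonzero_pt c' -> nonzero_pt d' ->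
  same_pt a a' -> same_pt b b' -> same_pt c c' -> same_pt d d' ->
  cr a' b' c' d' = cr a b c d.
Proof. intros.
  destruct (same_scale a a') as [ka [? ->]]; auto.
  destruct (same_scale b b') as [kb [? ->]]; auto.
  destruct (same_scale c c') as [kc [? ->]]; auto.
  destruct (same_scale d d') as [kd [? ->]]; auto.
  apply cr_smul; auto.
Qed.

Lemma cr_act g a b c d : isom_ok g ->
  cr (act g a) (act g b) (act g c) (act g d) = rho (im_rev g) (cr a b c d).
Proof. intros Hg. unfold cr. rewrite !det2_act, rho_div, !rho_mult.
  set (D := detI g).
  replace ((D * rho (im_rev g) (det2 d a) * (D * rho (im_rev g) (det2 c b))))%C with
    ((D*D) * (rho (im_rev g) (det2 d a) * rho (im_rev g) (det2 c b)))%C by ring.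
  replace ((D * rho (im_rev g) (det2 d b) * (D * rho (im_rev g) (det2 c a))))%C with
    ((D*D) * (rho (im_rev g) (det2 d b) * rho (im_rev g) (det2 c a)))%C by ring.
  apply Cdiv_cancel. intros E. destruct (Cmult_eq0 _ _ E); apply Hg; auto.
Qed.

Lemma act_same g p q : same_pt p q -> same_pt (act g p) (act g q).
Proof. unfold same_pt. intros H. rewrite det2_act, H.
  assert (rho (im_rev g) 0%C = 0%C) as ->. { destruct (im_rev g); simpl; auto.
   unfold Cconj; simpl. apply injective_projections; simpl; lra. }
  ring. Qed.

Lemma act_notsame g p q : isom_ok g -> ~ same_pt p q -> ~ same_pt (act g p) (act g q).
Proof. unfold same_pt. intros Hg H E. rewrite det2_act in E.
  destruct (Cmult_eq0 _ _ E). apply Hg; auto. apply (rho_neq0 (im_rev g) _ H); auto. Qed.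

Lemma mat_inj (a b c d x y : C) : (a*d - b*c)%C <> 0%C -> (a*x + b*y = 0)%C -> (c*x + d*y = 0)%C ->
  x = 0%C /\ y = 0%C.
Proof. intros Hg H1 H2.
  assert (E1 : ((a*d - b*c) * x)%C = 0%C).
  { replace (_ * _)%C with (d * (a*x+b*y) - b * (c*x+d*y))%C by ring. rewrite H1, H2. ring. }
  assert (E2 : ((a*d - b*c) * y)%C = 0%C).
  { replace (_ * _)%C with (a * (c*x+d*y) - c * (a*x+b*y))%C by ring. rewrite H1, H2. ring. }
  destruct (Cmult_eq0 _ _ E1); [tauto|]. destruct (Cmult_eq0 _ _ E2); [tauto|]. auto.
Qed.

Lemma act_nonzero g p : isom_ok g -> nonzero_pt p -> nonzero_pt (act g p).
Proof. unfold isom_ok, nonzero_pt. intros Hg Hp. apply NNPP; intros Hn.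
  apply not_or_and in Hn. destruct Hn as [H1 H2]. apply NNPP in H1; apply NNPP in H2.
  unfold act in H1, H2. destruct (im_rev g); simpl in H1, H2.
  - destruct (mat_inj _ _ _ _ _ _ Hg H1 H2). destruct Hp; auto using Cconj_eq0.
  - destruct (mat_inj _ _ _ _ _ _ Hg H1 H2). destruct Hp; auto.
Qed.


Definition icomp (g k : isom) : isom :=
  let r := rho (im_rev g) in
  Isom (im_a g * r (im_a k) + im_b g * r (im_c k))%C
       (im_a g * r (im_b k) + im_b g * r (im_d k))%C
       (im_c g * r (im_a k) + im_d g * r (im_c k))%C
       (im_c g * r (im_b k) + im_d g * r (im_d k))%C
       (xorb (im_rev g) (im_rev k)).

Definition iinv (g : isom) : isom :=
  let r := rho (im_rev g) in
  Isom (r (im_d g)) (r (- im_b g)%C) (r (- im_c g)%C) (r (im_a g)) (im_rev g).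

Definition idI : isom := Isom 1%C 0%C 0%C 1%C false.

Lemma act_id p : act idI p = p.
Proof. destruct p; unfold act; simpl. f_equal; ring. Qed.

Lemma act_comp g k p : act (icomp g k) p = act g (act k p).
Proof. destruct g as [a b c d rg], k as [A B C' D rk], p as [x y].
  unfold act, icomp; simpl. destruct rg, rk; simpl;
  rewrite ?Cplus_conj, ?Cmult_conj, ?Cconj_conj; f_equal; ring.
Qed.

Lemma act_inv g p : act (iinv g) (act g p) = smul (rho (im_rev g) (detI g)) p.
Proof. destruct g as [a b c d rg], p as [x y].
  unfold act, iinv, smul, detI; simpl. destruct rg; simpl;
  rewrite ?Cplus_conj, ?Cminus_conj, ?Cmult_conj, ?Copp_conj, ?Cconj_conj; f_equal; ring.
Qed.

Lemma comp_ok g k : isom_ok g -> isom_ok k -> isom_ok (icomp g k).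
Proof. unfold isom_ok, icomp; simpl. intros Hg Hk.
  replace (_ - _)%C with (detI g * rho (im_rev g) (detI k))%C.
  2: { unfold detI. destruct (im_rev g); simpl; rewrite ?Cminus_conj, ?Cmult_conj; ring. }
  intros E. destruct (Cmult_eq0 _ _ E). apply Hg; auto. apply (rho_neq0 (im_rev g) (detI k) Hk); auto.
Qed.

Lemma inv_ok g : isom_ok g -> isom_ok (iinv g).
Proof. unfold isom_ok, iinv; simpl. intros Hg.
  replace (_ - _)%C with (rho (im_rev g) (detI g)).
  2: { unfold detI. destruct (im_rev g); simpl; rewrite ?Cminus_conj, ?Cmult_conj, ?Copp_conj; ring. }
  apply rho_neq0; auto.
Qed.

Lemma same_smul k p : same_pt (smul k p) p.
Proof. unfold same_pt, det2, smul; simpl. ring. Qed.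

Lemma smul_nonzero (k : C) p : k <> 0%C -> nonzero_pt p -> nonzero_pt (smul k p).
Proof. unfold nonzero_pt, smul; simpl. intros Hk [H|H]; [left|right]; intros E;
  destruct (Cmult_eq0 _ _ E); auto. Qed.

Lemma opp_act g p q r x y : isom_ok g ->
  (opposite_sides (act g p) (act g q) (act g r) (act g x) (act g y) <-> opposite_sides p q r x y).
Proof. intros Hg. unfold opposite_sides. rewrite !cr_act by auto. rewrite !Im_rho.
  destruct (im_rev g); [|tauto]. split; intros; nra. Qed.

Lemma opp_congr p q r x y p' q' r' x' y' :
  nonzero_pt p -> nonzero_pt q -> nonzero_pt r -> nonzero_pt x -> nonzero_pt y ->
  nonzero_pt p' -> nonzero_pt q' -> nonzero_pt r' -> nonzero_pt x' -> nonzero_pt y' ->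
  same_pt p p' -> same_pt q q' -> same_pt r r' -> same_pt x x' -> same_pt y y' ->
  opposite_sides p q r x y -> opposite_sides p' q' r' x' y'.
Proof. intros. unfold opposite_sides in *.
  rewrite (cr_congr p q r x p' q' r' x'), (cr_congr p q r y p' q' r' y'); auto. Qed.


Lemma Cmod_sq (v : C) : Cmod v * Cmod v = fst v ^ 2 + snd v ^ 2.
Proof. unfold Cmod. apply sqrt_sqrt. nra. Qed.

Lemma Im_div_eq (u v : C) : v <> 0%C -> Im (u / v) = Im (u * Cconj v) / (fst v ^ 2 + snd v ^ 2).
Proof. intros Hv. pose proof (Cneq0_RR v Hv). destruct u as [u1 u2], v as [v1 v2]; simpl in *.
  unfold Cdiv, Cinv, Cmult, Cconj, Im; simpl. field. intros E; apply H; lra. Qed.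

Lemma Re_div_eq (u v : C) : v <> 0%C -> Re (u / v) = Re (u * Cconj v) / (fst v ^ 2 + snd v ^ 2).
Proof. intros Hv. pose proof (Cneq0_RR v Hv). destruct u as [u1 u2], v as [v1 v2]; simpl in *.
  unfold Cdiv, Cinv, Cmult, Cconj, Re; simpl. field. intros E; apply H; lra. Qed.

Lemma Im_div_nz (u v : C) : v <> 0%C -> (Im (u / v) <> 0 <-> Im (u * Cconj v) <> 0).
Proof. intros Hv. rewrite Im_div_eq by auto. pose proof (Cneq0_RR v Hv).
  assert (0 < fst v ^ 2 + snd v ^ 2) by (destruct v; simpl in *; nra).
  split; intros H1 H2; apply H1.
  - rewrite H2. unfold Rdiv. ring.
  - apply (Rmult_eq_reg_r (/ (fst v ^ 2 + snd v ^ 2))). rewrite Rmult_0_l. auto.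
    apply Rinv_neq_0_compat. lra.
Qed.

Lemma det2_nz p q : ~ same_pt p q -> det2 p q <> 0%C.
Proof. auto. Qed.

Lemma Cmult_nz (a b : C) : a <> 0%C -> b <> 0%C -> (a * b)%C <> 0%C.
Proof. intros Ha Hb E. destruct (Cmult_eq0 _ _ E); auto. Qed.

Lemma det2_swap p q : det2 q p = (- det2 p q)%C.
Proof. unfold det2. ring. Qed.

Lemma notsame_sym p q : ~ same_pt p q -> ~ same_pt q p.
Proof. intros H E. apply H, same_sym, E. Qed.

Lemma Im_conj_swap (X Y : C) : Im (Y * Cconj X) = - Im (X * Cconj Y).
Proof. destruct X, Y; simpl. ring. Qed.

Lemma Im_conj_bc (X Y : C) : Im ((- X) * Cconj (Y - X)) = - Im (X * Cconj Y).
Proof. destruct X, Y; simpl. ring. Qed.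

Ltac nzs := repeat first [ apply Cmult_nz | apply det2_nz; (assumption || (apply notsame_sym; assumption))].

Lemma it_swab a b c d : ideal_tetra a b c d -> ideal_tetra b a c d.
Proof. unfold ideal_tetra. intros (?&?&?&?&?&?&?&?&?&?&H).
  repeat split; auto using notsame_sym.
  unfold cr in *. apply Im_div_nz in H; try solve [nzs]. apply Im_div_nz; try solve [nzs].
  rewrite Im_conj_swap. intros E; apply H. lra.
Qed.

Lemma it_swcd a b c d : ideal_tetra a b c d -> ideal_tetra a b d c.
Proof. unfold ideal_tetra. intros (?&?&?&?&?&?&?&?&?&?&H).
  repeat split; auto using notsame_sym.
  unfold cr in *. apply Im_div_nz in H; try solve [nzs]. apply Im_div_nz; try solve [nzs].
  replace (det2 c a * det2 d b)%C with (det2 d b * det2 c a)%C by ring.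
  replace (det2 c b * det2 d a)%C with (det2 d a * det2 c b)%C by ring.
  rewrite Im_conj_swap. intros E; apply H. lra.
Qed.

Lemma it_swbc a b c d : ideal_tetra a b c d -> ideal_tetra a c b d.
Proof. unfold ideal_tetra. intros (?&?&?&?&?&?&?&?&?&?&H).
  repeat split; auto using notsame_sym.
  unfold cr in *. apply Im_div_nz in H; try solve [nzs].
  replace (det2 d a * det2 b c)%C with (- (det2 d a * det2 c b))%C by (unfold det2; ring).
  replace (det2 d c * det2 b a)%C with (det2 d b * det2 c a - det2 d a * det2 c b)%C by (unfold det2; ring).
  apply Im_div_nz.
  2: rewrite Im_conj_bc; intros E; apply H; lra.
  replace (det2 d b * det2 c a - det2 d a * det2 c b)%C with (det2 d c * det2 b a)%C by (unfold det2; ring).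
    nzs.
Qed.

Lemma it_perm (f : nat -> Pt) i j k l :
  ideal_tetra (f 0%nat) (f 1%nat) (f 2%nat) (f 3%nat) ->
  (i < 4)%nat -> (j < 4)%nat -> (k < 4)%nat -> (l < 4)%nat ->
  i <> j -> i <> k -> i <> l -> j <> k -> j <> l -> k <> l ->
  ideal_tetra (f i) (f j) (f k) (f l).
Proof. intros H0 **.
  destruct i as [|[|[|[|i]]]]; try lia; destruct j as [|[|[|[|j]]]]; try lia;
  destruct k as [|[|[|[|k]]]]; try lia; destruct l as [|[|[|[|l]]]]; try lia;
  eauto 8 using it_swab, it_swcd, it_swbc.
Qed.


Lemma pos_RR (z : C) : z <> 0%C -> 0 < fst z ^ 2 + snd z ^ 2.
Proof. intros H. pose proof (Cneq0_RR z H). destruct z; simpl in *. nra. Qed.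

Lemma Im_inv (z : C) : z <> 0%C -> Im (/ z) = - Im z * / (fst z ^ 2 + snd z ^ 2).
Proof. intros Hz. pose proof (Cneq0_RR z Hz). destruct z as [x y]; simpl in *.
  unfold Cinv; simpl. field. intros E; apply H; lra. Qed.

Lemma Im_inv_mul (z : C) : Im z <> 0 -> Im (/ z) * Im z < 0.
Proof. intros Hi. assert (Hz : z <> 0%C) by (intros E; subst; apply Hi; reflexivity).
  rewrite Im_inv by auto. pose proof (pos_RR z Hz).
  assert (0 < / (fst z ^ 2 + snd z ^ 2)) by (apply Rinv_0_lt_compat; auto).
  assert (0 < Im z * Im z) by (destruct (Rlt_or_le 0 (Im z)); nra).
  nra.
Qed.

Lemma Cinv_nz (z : C) : z <> 0%C -> (/ z)%C <> 0%C.
Proof. intros H E. assert (F : (z * / z)%C = 1%C) by (apply Cinv_r; auto). rewrite E, Cmult_0_r in F.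
  apply (f_equal fst) in F. simpl in F. lra. Qed.

Lemma Re_ratio (u v : C) : u <> 0%C -> v <> 0%C ->
  Re (u / v) / Cmod (u / v) = Re (u * Cconj v) / (Cmod u * Cmod v).
Proof. intros Hu Hv. rewrite Re_div_eq, Cmod_div by auto. rewrite <- Cmod_sq.
  apply Cmod_gt_0 in Hu. apply Cmod_gt_0 in Hv. field. lra. Qed.

Lemma Re_conj_comm (u v : C) : Re (u * Cconj v) = Re (v * Cconj u).
Proof. destruct u, v; simpl. ring. Qed.

Lemma dihedral_arg a b c d : ideal_tetra a b c d -> dihedral a b c d = arg (edge_inv a b c d).
Proof. intros HT. pose proof HT as (?&?&?&?&?&?&?&?&?&?&HI).
  unfold dihedral, edge_inv, arg.
  set (p := (det2 c a / det2 c b)%C). set (q := (det2 d a / det2 d b)%C).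
  assert (Hp : p <> 0%C). { unfold p. unfold Cdiv. apply Cmult_nz. nzs. apply Cinv_nz. nzs. }
  assert (Hq : q <> 0%C). { unfold q. unfold Cdiv. apply Cmult_nz. nzs. apply Cinv_nz. nzs. }
  assert (Hcr : cr a b c d = (q / p)%C).
  { unfold cr, p, q. field. repeat split; nzs. }
  rewrite Hcr in *. destruct (Rlt_dec 0 (Im (q / p))) as [Hl|Hl].
  - destruct (Rle_dec 0 (Im (q / p))) as [_|Hn]; [|lra].
    f_equal. rewrite Re_ratio by auto. rewrite Re_conj_comm, Rmult_comm. reflexivity.
  - assert (Hneg : Im (q / p) < 0) by lra.
    pose proof (Im_inv_mul (q / p) HI).
    assert (Hinv : (/ (q / p))%C = (p / q)%C) by (field; auto).
    rewrite Hinv in *. destruct (Rle_dec 0 (Im (p / q))) as [_|Hn]; [|nra].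
    f_equal. rewrite Re_ratio by auto. reflexivity.
Qed.


Lemma Cconj_1 : Cconj 1%C = 1%C.
Proof. unfold Cconj; simpl. apply injective_projections; simpl; lra. Qed.

Lemma Cinv_1 : (/ 1)%C = 1%C.
Proof. field. Qed.

Lemma f_sigma (z : C) (e : bool) : Im z <> 0 ->
  let ei := if Rlt_dec 0 (Im z) then z else Cinv z in
  let f := if e then ei else Cinv (Cconj ei) in
  let s := if e then z else Cconj z in
  (0 < Im s -> f = s) /\ (Im s < 0 -> f = Cinv s).
Proof. intros Hi ei f s.
  assert (Hz : z <> 0%C) by (intros E; subst; apply Hi; reflexivity).
  assert (Hcz : Cconj z <> 0%C) by (intros E; apply Hz, Cconj_eq0, E).
  unfold f, s, ei. destruct (Rlt_dec 0 (Im z)) as [Hp|Hp]; destruct e; split; intros H;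
   rewrite ?im_conj in H; try lra; try reflexivity.
  rewrite Cinv_conj by auto. field. auto.
Qed.

Lemma Cprod_ext n (f g : nat -> C) : (forall l, (l < n)%nat -> f l = g l) -> Cprod n f = Cprod n g.
Proof. induction n; simpl; intros H; auto. rewrite IHn, H; auto. Qed.

Lemma Rsum_ext n (f g : nat -> R) : (forall l, (l < n)%nat -> f l = g l) -> Rsum n f = Rsum n g.
Proof. induction n; simpl; intros H; auto. rewrite IHn, H; auto. Qed.

Lemma Cprod_inv n (f : nat -> C) : Cprod n (fun l => Cinv (f l)) = Cinv (Cprod n f).
Proof. induction n; simpl. symmetry; apply Cinv_1. rewrite IHn, Cinv_mult_gen. reflexivity. Qed.

Lemma Cprod_conj n (f : nat -> C) : Cprod n (fun l => Cconj (f l)) = Cconj (Cprod n f).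
Proof. induction n; simpl. symmetry; apply Cconj_1. rewrite IHn, Cmult_conj. reflexivity. Qed.

Lemma inv_eq1 (x : C) : Cinv x = 1%C -> x = 1%C.
Proof. intros H. destruct (classic (x = 0%C)) as [E|E].
  - subst. rewrite Cinv_0 in H. apply (f_equal fst) in H. simpl in H. lra.
  - replace x with (/ / x)%C by (field; auto). rewrite H. apply Cinv_1. Qed.

Lemma conj_eq1 (x : C) : Cconj x = 1%C -> x = 1%C.
Proof. intros H. rewrite <- (Cconj_conj x), H. apply Cconj_1. Qed.

Lemma tele n (u v : nat -> C) : (0 < n)%nat -> (forall l, (l < n)%nat -> u l <> 0%C) ->
  (forall l, (S l < n)%nat -> v l = u (S l)) ->
  Cprod n (fun l => (v l / u l)%C) = (v (pred n) / u 0%nat)%C.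
Proof. induction n as [|n IH]; intros Hn Hu Hv; [lia|].
  destruct n as [|n].
  - simpl. ring.
  - change (Cprod (S (S n)) (fun l => (v l / u l)%C)) with (Cprod (S n) (fun l => (v l / u l)%C) * (v (S n) / u (S n)))%C.
    rewrite IH; [simpl | lia | intros; apply Hu; lia | intros; apply Hv; lia].
    rewrite (Hv n) by lia. field. split; apply Hu; lia.
Qed.

Definition Ff (al be x : Pt) : C := (det2 x al / det2 x be)%C.

Lemma cr_Ff al be c d : det2 c al <> 0%C -> det2 c be <> 0%C -> det2 d be <> 0%C ->
  cr al be c d = (Ff al be d / Ff al be c)%C.
Proof. intros. unfold cr, Ff. field. auto. Qed.

Lemma Ff_congr al be x x' : nonzero_pt x -> nonzero_pt x' -> same_pt x x' -> Ff al be x' = Ff al be x.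
Proof. intros. destruct (same_scale x x') as [k [Hk ->]]; auto. unfold Ff.
  replace (smul k x) with (smul k x) by reflexivity.
  rewrite <- (smul1 al), <- (smul1 be). rewrite !det2_smul, !smul1.
  rewrite !Cmult_1_r. apply Cdiv_cancel; auto. Qed.

Lemma Ff_inj al be x y : ~ same_pt al be -> det2 x be <> 0%C -> det2 y be <> 0%C ->
  Ff al be x = Ff al be y -> same_pt x y.
Proof. unfold Ff, same_pt. intros Hab Hx Hy E.
  assert (E2 : (det2 x al * det2 y be - det2 y al * det2 x be)%C = 0%C).
  { replace (det2 x al) with (det2 x al / det2 x be * det2 x be)%C by (field; auto).
    rewrite E. field. auto. }
  replace (det2 x al * det2 y be - det2 y al * det2 x be)%C with (det2 x y * det2 al be)%C in E2
    by (unfold det2; ring).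
  destruct (Cmult_eq0 _ _ E2); auto. tauto.
Qed.


Lemma sgn3 (x y z : R) : x * y < 0 -> x * z < 0 -> y * z > 0.
Proof. intros. destruct (Rlt_or_le 0 x). nra. destruct (Req_dec x 0). subst; lra. nra. Qed.
Lemma sgn3' (x y z : R) : x * y > 0 -> x * z > 0 -> y * z > 0.
Proof. intros. destruct (Rlt_or_le 0 x). nra. destruct (Req_dec x 0). subst; lra. nra. Qed.
Lemma sgn3'' (x y z : R) : x * y > 0 -> x * z < 0 -> y * z < 0.
Proof. intros. destruct (Rlt_or_le 0 x). nra. destruct (Req_dec x 0). subst; lra. nra. Qed.

Lemma chain_sign n (x : nat -> R) : (forall l, (S l < n)%nat -> x l * x (S l) > 0) ->
  (0 < n)%nat -> x 0%nat <> 0 -> forall l, (l < n)%nat -> x l * x 0%nat > 0.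
Proof. intros H Hn H0 l. induction l; intros Hl.
  - assert (0 < x 0%nat * x 0%nat) by (destruct (Rlt_or_le 0 (x 0%nat)); nra). lra.
  - specialize (IHl ltac:(lia)). specialize (H l Hl). apply (sgn3' (x l)); nra.
Qed.

Lemma next_S n l : (S l < n)%nat -> next n l = S l.
Proof. intros H. unfold next. destruct (Nat.eqb_spec (S l) n); [lia|auto]. Qed.
Lemma next_last n l : S l = n -> next n l = 0%nat.
Proof. intros H. unfold next. destruct (Nat.eqb_spec (S l) n); [auto|lia]. Qed.

Lemma cr_swap_cd a b c d : det2 d a <> 0%C -> det2 c b <> 0%C -> det2 d b <> 0%C -> det2 c a <> 0%C ->
  cr a b d c = Cinv (cr a b c d).
Proof. intros. unfold cr. field. auto. Qed.

Lemma rho_cmp b1 b2 (z : C) : Im z <> 0 ->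
  (Im (rho b1 z) * Im (rho b2 z) > 0 -> rho b1 z = rho b2 z) /\
  (Im (rho b1 z) * Im (rho b2 z) < 0 -> rho b1 z = Cconj (rho b2 z)).
Proof. intros Hz. rewrite !Im_rho.
  assert (0 < Im z * Im z) by (destruct (Rlt_or_le 0 (Im z)); nra).
  destruct b1, b2; simpl; split; intros; try nra; rewrite ?Cconj_conj; reflexivity.
Qed.

Lemma it_act g a b c d : isom_ok g -> ideal_tetra a b c d ->
  ideal_tetra (act g a) (act g b) (act g c) (act g d).
Proof. intros Hg (?&?&?&?&?&?&?&?&?&?&HI).
  repeat split; auto using act_nonzero, act_notsame.
  rewrite cr_act, Im_rho by auto. destruct (im_rev g); lra. Qed.

Lemma notsame_congr p q r : nonzero_pt r -> ~ same_pt p q -> same_pt q r -> ~ same_pt p r.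
Proof. intros Hr H1 H2 H3. apply H1. apply (same_trans p r q); auto using same_sym. Qed.

Lemma sgn4 (wl w0 sl s0 : R) : wl * w0 > 0 -> sl * s0 > 0 -> w0 * s0 > 0 -> wl * sl > 0.
Proof. intros. assert (wl * w0 * (sl * s0) > 0) by nra.
  destruct (Rlt_or_le 0 w0); destruct (Rlt_or_le 0 s0); nra. Qed.
Lemma sgn4' (wl w0 sl s0 : R) : wl * w0 > 0 -> sl * s0 > 0 -> w0 * s0 < 0 -> wl * sl < 0.
Proof. intros. assert (wl * w0 * (sl * s0) > 0) by nra.
  destruct (Rlt_or_le 0 w0); destruct (Rlt_or_le 0 s0); nra. Qed.


Section Main.
Variable m : nat.
Variable A : nat -> nat -> Pt.
Hypothesis HA : forall i, (i < m)%nat -> ideal_tetra (A i 0%nat) (A i 1%nat) (A i 2%nat) (A i 3%nat).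
Variable n : nat.
Hypothesis Hn : (0 < n)%nat.
Variables idx va vb vc vd : nat -> nat.
Hypothesis Hidx : forall l, (l < n)%nat -> (idx l < m)%nat.
Hypothesis Hlab : forall l, (l < n)%nat ->
     (va l < 4)%nat /\ (vb l < 4)%nat /\ (vc l < 4)%nat /\ (vd l < 4)%nat /\
     va l <> vb l /\ va l <> vc l /\ va l <> vd l /\
     vb l <> vc l /\ vb l <> vd l /\ vc l <> vd l.
Variable h : nat -> isom.
Hypothesis Hglue : forall l, (l < n)%nat ->
     let l' := next n l in
     isom_ok (h l) /\
     same_pt (act (h l) (vA A idx va l)) (vA A idx va l') /\
     same_pt (act (h l) (vA A idx vb l)) (vA A idx vb l') /\
     same_pt (act (h l) (vA A idx vd l)) (vA A idx vc l') /\
     opposite_sides (vA A idx va l') (vA A idx vb l') (vA A idx vc l')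
       (act (h l) (vA A idx vc l)) (vA A idx vd l').
Variable eps : nat -> bool.
Hypothesis Heps0 : eps 0%nat = true.
Hypothesis Heps : forall l, (l < n)%nat ->
     eps (next n l) = Bool.eqb (eps l) (orientation_preserving (h l)).

Notation aa l := (vA A idx va l).
Notation bb l := (vA A idx vb l).
Notation cc l := (vA A idx vc l).
Notation dd l := (vA A idx vd l).

Lemma TT l : (l < n)%nat -> ideal_tetra (aa l) (bb l) (cc l) (dd l).
Proof. intros Hl. unfold vA. destruct (Hlab l Hl) as (?&?&?&?&?&?&?&?&?&?).
  apply (it_perm (A (idx l))); auto. Qed.

Definition crl l := cr (aa l) (bb l) (cc l) (dd l).
Definition sig l := rho (negb (eps l)) (crl l).

Ltac tfacts l Hl :=
  let H := fresh "T" in pose proof (TT l Hl) as H;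
  destruct H as (?&?&?&?&?&?&?&?&?&?&?).

Lemma glue_facts l : (S l < n)%nat ->
     isom_ok (h l) /\
     same_pt (act (h l) (aa l)) (aa (S l)) /\
     same_pt (act (h l) (bb l)) (bb (S l)) /\
     same_pt (act (h l) (dd l)) (cc (S l)) /\
     opposite_sides (aa (S l)) (bb (S l)) (cc (S l)) (act (h l) (cc l)) (dd (S l)) /\
     eps (S l) = Bool.eqb (eps l) (negb (im_rev (h l))).
Proof. intros Hl. pose proof (Hglue l ltac:(lia)) as G. cbv zeta in G.
  pose proof (Heps l ltac:(lia)) as E. rewrite (next_S n l Hl) in G, E. tauto. Qed.

Lemma glue_facts_last l : S l = n ->
     isom_ok (h l) /\
     same_pt (act (h l) (aa l)) (aa 0%nat) /\
     same_pt (act (h l) (bb l)) (bb 0%nat) /\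
     same_pt (act (h l) (dd l)) (cc 0%nat) /\
     opposite_sides (aa 0%nat) (bb 0%nat) (cc 0%nat) (act (h l) (cc l)) (dd 0%nat) /\
     true = Bool.eqb (eps l) (negb (im_rev (h l))).
Proof. intros Hl. pose proof (Hglue l ltac:(lia)) as G. cbv zeta in G.
  pose proof (Heps l ltac:(lia)) as E. rewrite (next_last n l Hl) in G, E. rewrite Heps0 in E. tauto. Qed.

Lemma Im_crl l : (l < n)%nat -> Im (crl l) <> 0.
Proof. intros Hl. tfacts l Hl. unfold crl. auto. Qed.

Lemma sign_step (X Y Z : R) (r e : bool) : X * Y < 0 ->
  (if r then - X else X) * Z < 0 ->
  (if e then Y else - Y) * (if Bool.eqb e (negb r) then Z else - Z) > 0.
Proof. intros H1 H2. destruct (Rlt_or_le 0 X).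
  - destruct r, e; simpl in *; nra.
  - destruct (Req_dec X 0). subst; lra. destruct r, e; simpl in *; nra.
Qed.

Lemma Im_sig l : Im (sig l) = if eps l then Im (crl l) else - Im (crl l).
Proof. unfold sig. rewrite Im_rho. destruct (eps l); reflexivity. Qed.

Lemma glue_sign l : (S l < n)%nat -> Im (sig l) * Im (sig (S l)) > 0.
Proof. intros Hl.
  destruct (glue_facts l Hl) as (Hok & Ha & Hb & Hd & Hopp & He).
  assert (Hl0 : (l < n)%nat) by lia. tfacts l Hl0. tfacts (S l) Hl.
  unfold opposite_sides in Hopp.
  rewrite (cr_congr (act (h l) (aa l)) (act (h l) (bb l)) (act (h l) (dd l)) (act (h l) (cc l))
     (aa (S l)) (bb (S l)) (cc (S l)) (act (h l) (cc l))) in Hopp;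
   auto using act_nonzero, same_refl.
  rewrite cr_act, cr_swap_cd in Hopp by (auto; nzs). rewrite Im_rho in Hopp.
  rewrite !Im_sig, He.
  apply (sign_step (Im (/ crl l)) (Im (crl l)) (Im (crl (S l))) (im_rev (h l)) (eps l)).
  - apply Im_inv_mul. unfold crl. auto.
  - unfold crl. destruct (im_rev (h l)); exact Hopp.
Qed.

Lemma sig_chain l : (l < n)%nat -> Im (sig l) * Im (sig 0%nat) > 0.
Proof. apply (chain_sign n (fun l => Im (sig l))); auto.
  - apply glue_sign.
  - rewrite Im_sig, Heps0. apply Im_crl. auto.
Qed.

Lemma sig_alt l : sig l = if eps l then crl l else Cconj (crl l).
Proof. unfold sig. destruct (eps l); reflexivity. Qed.

Definition FF l := let z := edge_inv (aa l) (bb l) (cc l) (dd l) in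
  if eps l then z else Cinv (Cconj z).

Lemma FF_sig l : (l < n)%nat ->
  (0 < Im (sig l) -> FF l = sig l) /\ (Im (sig l) < 0 -> FF l = Cinv (sig l)).
Proof. intros Hl. pose proof (f_sigma (crl l) (eps l) (Im_crl l Hl)) as H. cbv zeta in H.
  rewrite sig_alt. unfold FF, edge_inv. cbv zeta. exact H. Qed.

Lemma prod_equiv : Cprod n FF = 1%C <-> Cprod n sig = 1%C.
Proof.
  assert (H0 : Im (sig 0%nat) <> 0) by (rewrite Im_sig, Heps0; apply Im_crl; auto).
  destruct (Rlt_or_le 0 (Im (sig 0%nat))) as [Hp|Hp].
  - rewrite (Cprod_ext n FF sig). tauto. intros l Hl. apply (FF_sig l Hl).
    pose proof (sig_chain l Hl). nra.
  - rewrite (Cprod_ext n FF (fun l => Cinv (sig l))). rewrite Cprod_inv. split.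
    + apply inv_eq1.
    + intros ->. apply Cinv_1.
    + intros l Hl. apply (FF_sig l Hl).
      pose proof (sig_chain l Hl). destruct (Rlt_or_le 0 (Im (sig l))); try nra.
Qed.


Section Dev.
Variable g : nat -> isom.
Hypothesis Hgok : forall l, (l < n)%nat -> isom_ok (g l).
Hypothesis Hstep : forall l, (S l < n)%nat ->
  same_pt (act (g l) (aa l)) (act (g (S l)) (aa (S l))) /\
  same_pt (act (g l) (bb l)) (act (g (S l)) (bb (S l))) /\
  same_pt (act (g l) (dd l)) (act (g (S l)) (cc (S l))) /\
  opposite_sides (act (g (S l)) (aa (S l))) (act (g (S l)) (bb (S l))) (act (g (S l)) (cc (S l)))
     (act (g l) (cc l)) (act (g (S l)) (dd (S l))).

Notation ga l := (act (g l) (aa l)).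
Notation gb l := (act (g l) (bb l)).
Notation gc l := (act (g l) (cc l)).
Notation gd l := (act (g l) (dd l)).

Lemma TG l : (l < n)%nat -> ideal_tetra (ga l) (gb l) (gc l) (gd l).
Proof. intros Hl. apply it_act; auto. apply TT; auto. Qed.

Ltac gfacts l Hl :=
  let H := fresh "G" in pose proof (TG l Hl) as H;
  destruct H as (?&?&?&?&?&?&?&?&?&?&?).

Lemma dev_step l : (S l < n)%nat ->
  same_pt (ga l) (ga (S l)) /\ same_pt (gb l) (gb (S l)) /\ same_pt (gd l) (gc (S l)) /\
  opposite_sides (ga (S l)) (gb (S l)) (gc (S l)) (gc l) (gd (S l)).
Proof. apply Hstep. Qed.

Lemma dev_chain l : (l < n)%nat -> same_pt (ga l) (ga 0%nat) /\ same_pt (gb l) (gb 0%nat).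
Proof. induction l; intros Hl. split; apply same_refl.
  destruct IHl as [IH1 IH2]; [lia|]. destruct (dev_step l Hl) as (S1 & S2 & _).
  assert (Hl0 : (l < n)%nat) by lia. gfacts l Hl0.
  split.
  - apply (same_trans _ (ga l)); auto using same_sym.
  - apply (same_trans _ (gb l)); auto using same_sym.
Qed.

Definition al := ga 0%nat.
Definition be := gb 0%nat.
Definition ww l := cr (ga l) (gb l) (gc l) (gd l).
Definition uu l := Ff al be (gc l).
Definition vv l := Ff al be (gd l).

Lemma ww_rho l : (l < n)%nat -> ww l = rho (im_rev (g l)) (crl l).
Proof. intros Hl. unfold ww, crl. apply cr_act. auto. Qed.

Lemma Im_ww l : (l < n)%nat -> Im (ww l) <> 0.
Proof. intros Hl. gfacts l Hl. unfold ww. auto. Qed.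

Lemma ww_Ff l : (l < n)%nat -> ww l = (vv l / uu l)%C /\ uu l <> 0%C.
Proof. intros Hl. gfacts l Hl. assert (Hz : (0 < n)%nat) by lia. gfacts 0%nat Hz.
  destruct (dev_chain l Hl) as [C1 C2].
  assert (N1 : ~ same_pt (gc l) al). { unfold al. apply (notsame_congr _ (ga l)); auto using notsame_sym. }
  assert (N2 : ~ same_pt (gc l) be). { unfold be. apply (notsame_congr _ (gb l)); auto using notsame_sym. }
  assert (N3 : ~ same_pt (gd l) be). { unfold be. apply (notsame_congr _ (gb l)); auto using notsame_sym. }
  split.
  - unfold ww. rewrite <- (cr_congr (ga l) (gb l) (gc l) (gd l) al be (gc l) (gd l)); auto using same_refl.
    unfold vv, uu. apply cr_Ff; auto.
  - unfold uu, Ff, Cdiv. apply Cmult_nz; auto. apply Cinv_nz; auto.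
Qed.

Lemma prod_ww_gen : Cprod n ww = (vv (pred n) / uu 0%nat)%C.
Proof.
  rewrite (Cprod_ext n ww (fun l => (vv l / uu l)%C)) by (intros; apply ww_Ff; auto).
  rewrite tele; auto.
  - intros; apply ww_Ff; auto.
  - intros l Hl. assert (Hl0 : (l < n)%nat) by lia. gfacts l Hl0. gfacts (S l) Hl.
    destruct (dev_step l Hl) as (_ & _ & D & _). unfold vv, uu.
    apply Ff_congr; auto using same_sym.
Qed.

Lemma ww_sign l : (S l < n)%nat -> Im (ww l) * Im (ww (S l)) > 0.
Proof. intros Hl. assert (Hl0 : (l < n)%nat) by lia. gfacts l Hl0. gfacts (S l) Hl.
  destruct (dev_step l Hl) as (S1 & S2 & S3 & Hopp). unfold opposite_sides in Hopp.
  rewrite (cr_congr (ga l) (gb l) (gd l) (gc l) (ga (S l)) (gb (S l)) (gc (S l)) (gc l)) in Hopp;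
    auto using same_refl.
  rewrite cr_swap_cd in Hopp by nzs. fold (ww l) in Hopp. fold (ww (S l)) in Hopp.
  apply (sgn3 (Im (/ ww l))); auto. apply Im_inv_mul, Im_ww; auto.
Qed.

Lemma ww_chain l : (l < n)%nat -> Im (ww l) * Im (ww 0%nat) > 0.
Proof. apply (chain_sign n (fun l => Im (ww l))); auto.
  - apply ww_sign.
  - apply Im_ww. auto. Qed.

Lemma dev_prod_sig : Cprod n ww = 1%C -> Cprod n sig = 1%C.
Proof. intros prod_ww.
  assert (Hz : (0 < n)%nat) by lia.
  assert (Hw0 : Im (ww 0%nat) <> 0) by (apply Im_ww; auto).
  assert (Hs0 : Im (sig 0%nat) <> 0) by (rewrite Im_sig, Heps0; apply Im_crl; auto).
  destruct (Rlt_or_le 0 (Im (ww 0%nat) * Im (sig 0%nat))) as [Hp|Hp].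
  - rewrite <- prod_ww. apply Cprod_ext. intros l Hl.
    rewrite ww_rho by auto. unfold sig. apply (proj1 (rho_cmp _ _ _ (Im_crl l Hl))).
    rewrite <- ww_rho by auto. fold (sig l). rewrite Rmult_comm.
    apply (sgn4 _ (Im (ww 0%nat)) _ (Im (sig 0%nat))); auto using ww_chain, sig_chain.
  - assert (Hn' : Im (ww 0%nat) * Im (sig 0%nat) < 0).
    { destruct (Req_dec (Im (ww 0%nat) * Im (sig 0%nat)) 0) as [E|E]; [|lra].
      apply Rmult_integral in E. tauto. }
    apply conj_eq1. rewrite <- Cprod_conj, <- prod_ww. apply Cprod_ext. intros l Hl.
    rewrite ww_rho by auto. unfold sig. symmetry. apply (proj2 (rho_cmp _ _ _ (Im_crl l Hl))).
    rewrite <- ww_rho by auto. fold (sig l).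
    apply (sgn4' _ _ _ _ (ww_chain l Hl) (sig_chain l Hl) Hn').
Qed.
End Dev.

Lemma lhs_prod : hyp_structure_around A n idx va vb vc vd -> Cprod n sig = 1%C.
Proof. intros (g & Hgok & Hgrel & _).
  assert (Hstep : forall l, (S l < n)%nat ->
    same_pt (act (g l) (aa l)) (act (g (S l)) (aa (S l))) /\
    same_pt (act (g l) (bb l)) (act (g (S l)) (bb (S l))) /\
    same_pt (act (g l) (dd l)) (act (g (S l)) (cc (S l))) /\
    opposite_sides (act (g (S l)) (aa (S l))) (act (g (S l)) (bb (S l))) (act (g (S l)) (cc (S l)))
     (act (g l) (cc l)) (act (g (S l)) (dd (S l)))).
  { intros l Hl. pose proof (Hgrel l ltac:(lia)) as G. cbv zeta in G.
    rewrite (next_S n l Hl) in G. exact G. }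
  apply (dev_prod_sig g Hgok Hstep).
  rewrite prod_ww_gen by auto.
  assert (Hl : S (pred n) = n) by lia.
  pose proof (Hgrel (pred n) ltac:(lia)) as G. cbv zeta in G.
  rewrite (next_last n _ Hl) in G. destruct G as (_ & _ & D & _).
  assert (Hp : (pred n < n)%nat) by lia. assert (Hz : (0 < n)%nat) by lia.
  pose proof (TG g Hgok _ Hp) as (?&?&?&?&?&?&?&?&?&?&?).
  pose proof (TG g Hgok _ Hz) as (?&?&?&?&?&?&?&?&?&?&?).
  unfold vv. rewrite (Ff_congr _ _ (act (g 0%nat) (cc 0%nat)) (act (g (pred n)) (dd (pred n)))); auto using same_sym.
  fold (uu g 0%nat). field. apply (ww_Ff g Hgok Hstep); auto.
Qed.

Fixpoint gg (l : nat) : isom := match l with O => idI | S k => icomp (gg k) (iinv (h k)) end.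

Lemma gg_ok l : (l < n)%nat -> isom_ok (gg l) /\ im_rev (gg l) = negb (eps l).
Proof. induction l; intros Hl.
  - simpl. split. unfold isom_ok; simpl. intros E. apply (f_equal fst) in E. simpl in E. lra.
    rewrite Heps0. reflexivity.
  - destruct IHl as [IH1 IH2]; [lia|]. destruct (glue_facts l Hl) as (Hok & _ & _ & _ & _ & He).
    simpl. split. apply comp_ok; auto. apply inv_ok; auto.
    simpl. rewrite IH2, He. destruct (eps l), (im_rev (h l)); reflexivity.
Qed.

Lemma gg_back l x : (S l < n)%nat -> same_pt (act (gg (S l)) (act (h l) x)) (act (gg l) x).
Proof. intros Hl. simpl. rewrite act_comp, act_inv. apply act_same, same_smul. Qed.

Lemma gg_step l : (S l < n)%nat ->
  same_pt (act (gg l) (aa l)) (act (gg (S l)) (aa (S l))) /\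
  same_pt (act (gg l) (bb l)) (act (gg (S l)) (bb (S l))) /\
  same_pt (act (gg l) (dd l)) (act (gg (S l)) (cc (S l))) /\
  opposite_sides (act (gg (S l)) (aa (S l))) (act (gg (S l)) (bb (S l))) (act (gg (S l)) (cc (S l)))
     (act (gg l) (cc l)) (act (gg (S l)) (dd (S l))).
Proof. intros Hl. assert (Hl0 : (l < n)%nat) by lia.
  destruct (glue_facts l Hl) as (Hok & Ha & Hb & Hd & Hopp & He).
  destruct (gg_ok l Hl0) as [G0 _]. destruct (gg_ok (S l) Hl) as [G1 _].
  pose proof (TT l Hl0) as (?&?&?&?&?&?&?&?&?&?&?).
  pose proof (TT (S l) Hl) as (?&?&?&?&?&?&?&?&?&?&?).
  pose proof (gg_back l (aa l) Hl). pose proof (gg_back l (bb l) Hl).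
  pose proof (gg_back l (cc l) Hl). pose proof (gg_back l (dd l) Hl).
  assert (NZ : forall x, nonzero_pt x -> nonzero_pt (act (gg (S l)) (act (h l) x)))
    by (intros; apply act_nonzero; auto; apply act_nonzero; auto).
  split; [|split; [|split]].
  - apply (same_trans _ (act (gg (S l)) (act (h l) (aa l)))); auto using same_sym, act_same.
  - apply (same_trans _ (act (gg (S l)) (act (h l) (bb l)))); auto using same_sym, act_same.
  - apply (same_trans _ (act (gg (S l)) (act (h l) (dd l)))); auto using same_sym, act_same.
  - apply (opp_act (gg (S l))) in Hopp; auto.
    refine (opp_congr _ _ _ _ _ _ _ _ _ _ _ _ _ _ _ _ _ _ _ _ _ _ _ _ _ Hopp);
     auto using act_nonzero, same_refl.
Qed.

Lemma gg_okk : forall l, (l < n)%nat -> isom_ok (gg l).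
Proof. intros; apply gg_ok; auto. Qed.

Lemma gg_last l : S l = n -> Cprod n sig = 1%C ->
  same_pt (act (gg l) (aa l)) (aa 0%nat) /\
  same_pt (act (gg l) (bb l)) (bb 0%nat) /\
  same_pt (act (gg l) (dd l)) (cc 0%nat) /\
  opposite_sides (aa 0%nat) (bb 0%nat) (cc 0%nat) (act (gg l) (cc l)) (dd 0%nat).
Proof. intros Hl Hprod.
  pose proof (gg_step) as Hstep.
  assert (Hl0 : (l < n)%nat) by lia. assert (Hz : (0 < n)%nat) by lia.
  assert (E0 : forall x, act (gg 0%nat) x = x) by (intros; apply act_id).
  pose proof (TG gg gg_okk _ Hl0) as (?&?&?&?&?&?&?&?&?&?&?).
  pose proof (TG gg gg_okk _ Hz) as (?&?&?&?&?&?&?&?&?&?&?).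
  rewrite !E0 in *.
  destruct (dev_chain gg gg_okk Hstep l Hl0) as [C1 C2]. rewrite !E0 in C1, C2.
  assert (Hww : forall l, (l < n)%nat -> ww gg l = sig l).
  { intros k Hk. rewrite ww_rho by (auto; apply gg_okk). destruct (gg_ok k Hk) as [_ ->]. reflexivity. }
  assert (D : same_pt (act (gg l) (dd l)) (cc 0%nat)).
  { pose proof (prod_ww_gen gg gg_okk Hstep) as P.
    rewrite (Cprod_ext n (ww gg) sig Hww), Hprod in P.
    destruct (ww_Ff gg gg_okk Hstep 0%nat Hz) as [_ Hu0].
    assert (V : vv gg (pred n) = uu gg 0%nat).
    { replace (vv gg (pred n)) with (vv gg (pred n) / uu gg 0%nat * uu gg 0%nat)%C by (field; auto).
      rewrite <- P. ring. }
    replace (pred n) with l in V by lia.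
    unfold vv, uu, al, be in V. rewrite !E0 in V.
    apply (Ff_inj (aa 0%nat) (bb 0%nat)) in V; auto.
    - apply det2_nz. apply (notsame_congr _ (act (gg l) (bb l))); auto using notsame_sym.
    - apply det2_nz. auto using notsame_sym. }
  split; [auto|split; [auto|split; [auto|]]].
  unfold opposite_sides.
  rewrite (cr_congr (act (gg l) (aa l)) (act (gg l) (bb l)) (act (gg l) (dd l)) (act (gg l) (cc l))
     (aa 0%nat) (bb 0%nat) (cc 0%nat) (act (gg l) (cc l))); auto using same_refl.
  rewrite cr_swap_cd by nzs. fold (ww gg l). rewrite Hww by auto.
  fold (crl 0%nat). replace (crl 0%nat) with (sig 0%nat) by (unfold sig; rewrite Heps0; reflexivity).
  pose proof (sig_chain l Hl0) as SC.
  pose proof (Im_inv_mul (sig l)) as II.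
  assert (Im (sig l) <> 0). { intros E. rewrite E in SC. lra. }
  specialize (II H21).
  rewrite Rmult_comm in II. pose proof (sgn3'' _ _ _ SC II). lra.
Qed.

Lemma rhs_lhs : Cprod n sig = 1%C ->
  Rsum n (fun l => dihedral (aa l) (bb l) (cc l) (dd l)) = 2 * PI ->
  hyp_structure_around A n idx va vb vc vd.
Proof. intros Hprod Hsum. exists gg. split; [exact gg_okk|]. split; [|exact Hsum].
  intros l Hl. cbv zeta. destruct (Nat.lt_ge_cases (S l) n) as [H|H].
  - rewrite (next_S n l H). apply gg_step; auto.
  - assert (E : S l = n) by lia. rewrite (next_last n l E).
    rewrite !act_id. apply gg_last; auto.
Qed.

Lemma sum_equiv : Rsum n (fun l => dihedral (aa l) (bb l) (cc l) (dd l)) =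
  Rsum n (fun l => arg (edge_inv (aa l) (bb l) (cc l) (dd l))).
Proof. apply Rsum_ext. intros l Hl. apply dihedral_arg, TT; auto. Qed.

Theorem main_iff : hyp_structure_around A n idx va vb vc vd <->
  (Cprod n (fun l =>
      let z := edge_inv (vA A idx va l) (vA A idx vb l) (vA A idx vc l) (vA A idx vd l) in
      if eps l then z else Cinv (Cconj z)) = 1%C /\
   Rsum n (fun l =>
      arg (edge_inv (vA A idx va l) (vA A idx vb l) (vA A idx vc l) (vA A idx vd l)))
     = 2 * PI).
Proof using All.
  change (Cprod n (fun l =>
      let z := edge_inv (vA A idx va l) (vA A idx vb l) (vA A idx vc l) (vA A idx vd l) in
      if eps l then z else Cinv (Cconj z))) with (Cprod n FF).
  rewrite prod_equiv, <- sum_equiv. split.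
  - intros HS. split. apply lhs_prod; auto. destruct HS as (g & _ & _ & HS). exact HS.
  - intros [H1 H2]. apply rhs_lhs; auto.
Qed.

End Main.

Theorem proposition2p2
  (m : nat) (A : nat -> nat -> Pt)
  (HA : forall i, (i < m)%nat -> ideal_tetra (A i 0%nat) (A i 1%nat) (A i 2%nat) (A i 3%nat))
  (n : nat) (Hn : (0 < n)%nat)
  (idx va vb vc vd : nat -> nat)
  (Hidx : forall l, (l < n)%nat -> (idx l < m)%nat)
  (Hlab : forall l, (l < n)%nat ->
     (va l < 4)%nat /\ (vb l < 4)%nat /\ (vc l < 4)%nat /\ (vd l < 4)%nat /\
     va l <> vb l /\ va l <> vc l /\ va l <> vd l /\
     vb l <> vc l /\ vb l <> vd l /\ vc l <> vd l)
  (Hdistinct : forall l1 l2, (l1 < n)%nat -> (l2 < n)%nat -> l1 <> l2 ->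
     idx l1 <> idx l2 \/
     ~ ((va l1 = va l2 /\ vb l1 = vb l2) \/ (va l1 = vb l2 /\ vb l1 = va l2)))
  (h : nat -> isom)
  (Hglue : forall l, (l < n)%nat ->
     let l' := next n l in
     isom_ok (h l) /\
     same_pt (act (h l) (vA A idx va l)) (vA A idx va l') /\
     same_pt (act (h l) (vA A idx vb l)) (vA A idx vb l') /\
     same_pt (act (h l) (vA A idx vd l)) (vA A idx vc l') /\
     opposite_sides (vA A idx va l') (vA A idx vb l') (vA A idx vc l')
       (act (h l) (vA A idx vc l)) (vA A idx vd l'))
  (eps : nat -> bool)
  (Heps0 : eps 0%nat = true)
  (Heps : forall l, (l < n)%nat ->
     eps (next n l) = Bool.eqb (eps l) (orientation_preserving (h l))) :
  hyp_structure_around A n idx va vb vc vd <->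
  (Cprod n (fun l =>
      let z := edge_inv (vA A idx va l) (vA A idx vb l) (vA A idx vc l) (vA A idx vd l) in
      if eps l then z else Cinv (Cconj z)) = 1%C /\
   Rsum n (fun l =>
      arg (edge_inv (vA A idx va l) (vA A idx vb l) (vA A idx vc l) (vA A idx vd l)))
     = 2 * PI).
Proof.
  exact (main_iff m A HA n Hn idx va vb vc vd Hidx Hlab h Hglue eps Heps0 Heps).
Qed.
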